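(* Let $M$ be a $(B,A)$-bimodule with $M_A$ finitely generated projective, $S=\mathrm{End}_A(M)$, and $\mathcal{C}=M^*\otimes_BM$ the comatrix $A$-coring. Suppose $\gamma:\mathcal{C}\otimes_A\mathcal{C}\to A$ is a pre-cointegral for $\mathcal{C}$. Identify $S\cong M\otimes_AM^*$ (via $m\otimes\varphi\mapsto(x\mapsto m\varphi(x))$), so that $S\otimes_BS\otimes_BS\cong M\otimes_A\mathcal{C}\otimes_A\mathcal{C}\otimes_AM^*$, and define $\tilde\gamma:S\otimes_BS\otimes_BS\to S$ by $\tilde\gamma(m\otimes\varphi\otimes m'\otimes\varphi'\otimes m''\otimes\varphi'')=m\,\gamma(\varphi\otimes m'\otimes\varphi'\otimes m'')\otimes\varphi''$ (i.e. $\tilde\gamma=M\otimes\gamma\otimes M^*$ followed by $M\otimes_AA\otimes_AM^*\cong M\otimes_AM^*$). Then $\tilde\gamma$, regarded as a map $(S\otimes_BS)\otimes_S(S\otimes_BS)\cong S\otimes_BS\otimes_BS\to S$, is a pre-cointegral for the Sweedler $S$-coring $S\otimes_BS$.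
   Context: All rings are associative with $1$. For a $(B,A)$-bimodule $M$ with $M_A$ finitely generated projective, $M^*=\mathrm{Hom}_A(M,A)$ is an $(A,B)$-bimodule, and with a finite dual basis $\{e_i,e_i^*\}_{i\in I}$ the comatrix $A$-coring is $M^*\otimes_BM$ with coproduct $\varphi\otimes m\mapsto\sum_i\varphi\otimes e_i\otimes e_i^*\otimes m$ and counit $\varphi\otimes m\mapsto\varphi(m)$. $S=\mathrm{End}_A(M)$ with composition, and $B\to S$, $b\mapsto(m\mapsto bm)$. The Sweedler $S$-coring $S\otimes_BS$ has coproduct $s\otimes s'\mapsto s\otimes1_S\otimes s'$ and counit $s\otimes s'\mapsto ss'$. For an $A$-coring $\mathcal{C}$ with coproduct $\Delta(c)=\sum c_{(1)}\otimes c_{(2)}$, a pre-cointegral is an $(A,A)$-bimodule map $\gamma:\mathcal{C}\otimes_A\mathcal{C}\to A$ such that $\sum c_{(1)}\gamma(c_{(2)}\otimes c')=\sum\gamma(c\otimes c'_{(1)})c'_{(2)}$ for all $c,c'\in\mathcal{C}$. *)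

(* Defs.v *)
From HB Require Import structures.
From mathcomp Require Import all_boot all_algebra.
Set Implicit Arguments.
Unset Strict Implicit.
Unset Printing Implicit Defensive.
Import GRing.Theory.
Local Open Scope ring_scope.

(* Tensor product X (x)_R Y of a right R-module X and a left R-module Y,    *)
(* presented as formal sums (lists of pairs) modulo the congruence          *)
(* generated by the defining relations of the tensor product.  The quotient *)
(* of the free commutative monoid on X*Y by this congruence is exactly the  *)
(* abelian group X (x)_R Y; [teq s t] means "s and t are equal in X (x)_R Y".*)
Section Tensor.
Variables (R X Y : Type) (addX : X -> X -> X) (oppX : X -> X)
  (addY : Y -> Y -> Y) (rX : X -> R -> X) (lY : R -> Y -> Y).

Inductive teq : seq (X * Y) -> seq (X * Y) -> Prop :=
| teq_refl s : teq s s
| teq_sym s t : teq s t -> teq t s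
| teq_trans s t u : teq s t -> teq t u -> teq s u
| teq_cat s1 s2 t1 t2 : teq s1 t1 -> teq s2 t2 -> teq (s1 ++ s2) (t1 ++ t2)
| teq_swap s t : teq (s ++ t) (t ++ s)
| teq_addl x1 x2 y : teq [:: (addX x1 x2, y)] [:: (x1, y); (x2, y)]
| teq_addr x y1 y2 : teq [:: (x, addY y1 y2)] [:: (x, y1); (x, y2)]
| teq_bal x r y : teq [:: (rX x r, y)] [:: (x, lY r y)]
| teq_opp x y : teq [:: (x, y); (oppX x, y)] [::].

End Tensor.

(* Pre-cointegrals for a K-coring C = X (x)_R Y whose coproduct is given on  *)
(* generators x (x) y by a formal sum in C (x)_K C = X (x)_R Y (x)_K X (x)_R Y*)
(* (quadruples (x1,y1,x2,y2) stand for (x1 (x) y1) (x)_K (x2 (x) y2)).       *)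
(* A (K,K)-bimodule map gam : C (x)_K C -> K is given, via the universal     *)
(* property of the tensor product, by its values on generators             *)
(* gam x y x' y' = gam((x (x) y) (x)_K (x' (x) y')), which must be additive  *)
(* in each argument, balanced, and K-bilinear on the outside.              *)
Section PreCointegral.
Variables (R K X Y : Type)
  (addK mulK : K -> K -> K)
  (addX : X -> X -> X) (oppX : X -> X) (addY : Y -> Y -> Y)
  (rX : X -> R -> X) (lY : R -> Y -> Y)
  (lKX : K -> X -> X) (rYK : Y -> K -> Y)
  (delta : X -> Y -> seq (X * Y * X * Y)).

(* gam induces a well defined additive map on C (x)_K C *)
Definition tensor_map4 (gam : X -> Y -> X -> Y -> K) : Prop :=
  [/\ (forall x1 x2 y x' y',
          gam (addX x1 x2) y x' y' = addK (gam x1 y x' y') (gam x2 y x' y')),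
      (forall x y1 y2 x' y',
          gam x (addY y1 y2) x' y' = addK (gam x y1 x' y') (gam x y2 x' y')),
      (forall x y x1' x2' y',
          gam x y (addX x1' x2') y' = addK (gam x y x1' y') (gam x y x2' y')),
      (forall x y x' y1' y2',
          gam x y x' (addY y1' y2') = addK (gam x y x' y1') (gam x y x' y2'))
    & [/\ (forall x r y x' y', gam (rX x r) y x' y' = gam x (lY r y) x' y'),
          (forall x y k x' y', gam x (rYK y k) x' y' = gam x y (lKX k x') y')
        & (forall x y x' r y', gam x y (rX x' r) y' = gam x y x' (lY r y'))]].

Definition bimod_map4 (gam : X -> Y -> X -> Y -> K) : Prop :=
  (forall k x y x' y', gam (lKX k x) y x' y' = mulK k (gam x y x' y')) /\
  (forall x y x' y' k, gam x y x' (rYK y' k) = mulK (gam x y x' y') k).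

(* sum_{(c)} c_(1) gam(c_(2) (x) c')  for formal sums c, c' *)
Definition pc_lhs (gam : X -> Y -> X -> Y -> K) (c c' : seq (X * Y))
  : seq (X * Y) :=
  flatten [seq flatten [seq [seq (q.1.1.1, rYK q.1.1.2 (gam q.1.2 q.2 p'.1 p'.2))
                            | q <- delta p.1 p.2] | p' <- c'] | p <- c].

(* sum_{(c')} gam(c (x) c'_(1)) c'_(2)  for formal sums c, c' *)
Definition pc_rhs (gam : X -> Y -> X -> Y -> K) (c c' : seq (X * Y))
  : seq (X * Y) :=
  flatten [seq flatten [seq [seq (lKX (gam p.1 p.2 q.1.1.1 q.1.1.2) q.1.2, q.2)
                            | q <- delta p'.1 p'.2] | p' <- c'] | p <- c].

Definition pre_cointegral (gam : X -> Y -> X -> Y -> K) : Prop :=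
  [/\ tensor_map4 gam, bimod_map4 gam &
      forall c c' : seq (X * Y),
        teq addX oppX addY rX lY (pc_lhs gam c c') (pc_rhs gam c c')].

End PreCointegral.

Record bimod (B A : pzRingType) := Bimod {
  bm_car :> zmodType;
  bm_l : B -> bm_car -> bm_car;
  bm_r : bm_car -> A -> bm_car;
  bm_lD : forall b m1 m2, bm_l b (m1 + m2) = bm_l b m1 + bm_l b m2;
  bm_lDs : forall b1 b2 m, bm_l (b1 + b2) m = bm_l b1 m + bm_l b2 m;
  bm_lM : forall b1 b2 m, bm_l (b1 * b2) m = bm_l b1 (bm_l b2 m);
  bm_l1 : forall m, bm_l 1 m = m;
  bm_rD : forall m1 m2 a, bm_r (m1 + m2) a = bm_r m1 a + bm_r m2 a;
  bm_rDs : forall m a1 a2, bm_r m (a1 + a2) = bm_r m a1 + bm_r m a2;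
  bm_rM : forall m a1 a2, bm_r m (a1 * a2) = bm_r (bm_r m a1) a2;
  bm_r1 : forall m, bm_r m 1 = m;
  bm_lr : forall b m a, bm_r (bm_l b m) a = bm_l b (bm_r m a)
}.

Lemma additive_opp (U V : zmodType) (f : U -> V) :
  (forall x y, f (x + y) = f x + f y) -> forall x, f (- x) = - f x.
Proof.
move=> fD x.
have f0 : f 0 = 0.
  have h := fD 0 0; rewrite addr0 in h.
  by apply: (addrI (f 0)); rewrite addr0 -h.
apply: (addrI (f x)); rewrite -fD subrr f0 subrr //.
Qed.

Section Bimod.
Variables (B A : pzRingType) (M : bimod B A).

Lemma bm_rN (m : M) a : bm_r m (- a) = - bm_r m a.
Proof. by apply: (@additive_opp A M (bm_r m)) => x y; rewrite bm_rDs. Qed.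

Lemma bm_rNm (m : M) a : bm_r (- m) a = - bm_r m a.
Proof. by apply: (@additive_opp M M (fun x => bm_r x a)) => x y; rewrite bm_rD. Qed.

Lemma bm_lN b (m : M) : bm_l b (- m) = - bm_l b m.
Proof. by apply: (@additive_opp M M (bm_l b)) => x y; rewrite bm_lD. Qed.

Lemma bm_r0m a : bm_r (0 : M) a = 0.
Proof.
have h := bm_rD (0 : M) 0 a; rewrite addr0 in h.
by apply: (addrI (bm_r (0 : M) a)); rewrite addr0 -h.
Qed.

Record dual := Dual {
  dfun :> M -> A;
  dfun_add : forall x y, dfun (x + y) = dfun x + dfun y;
  dfun_lin : forall x a, dfun (bm_r x a) = dfun x * a
}.

Definition dual_add (f g : dual) : dual.
Proof.
refine (@Dual (fun x => f x + g x) _ _).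
- by move=> x y; rewrite !dfun_add addrACA.
- by move=> x a; rewrite !dfun_lin mulrDl.
Defined.

Definition dual_opp (f : dual) : dual.
Proof.
refine (@Dual (fun x => - f x) _ _).
- by move=> x y; rewrite dfun_add opprD.
- by move=> x a; rewrite dfun_lin mulNr.
Defined.

Definition dual_rB (f : dual) (b : B) : dual.
Proof.
refine (@Dual (fun x => f (bm_l b x)) _ _).
- by move=> x y; rewrite bm_lD dfun_add.
- by move=> x a; rewrite -bm_lr dfun_lin.
Defined.

Definition dual_lA (a : A) (f : dual) : dual.
Proof.
refine (@Dual (fun x => a * f x) _ _).
- by move=> x y; rewrite dfun_add mulrDr.
- by move=> x a'; rewrite dfun_lin mulrA.
Defined.

Record endo := Endo {
  efun :> M -> M;
  efun_add : forall x y, efun (x + y) = efun x + efun y;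
  efun_lin : forall x a, efun (bm_r x a) = bm_r (efun x) a
}.

Definition endo_add (s t : endo) : endo.
Proof.
refine (@Endo (fun x => s x + t x) _ _).
- by move=> x y; rewrite !efun_add addrACA.
- by move=> x a; rewrite !efun_lin bm_rD.
Defined.

Definition endo_opp (s : endo) : endo.
Proof.
refine (@Endo (fun x => - s x) _ _).
- by move=> x y; rewrite efun_add opprD.
- by move=> x a; rewrite efun_lin bm_rNm.
Defined.

Definition endo_zero : endo.
Proof.
refine (@Endo (fun _ => 0) _ _).
- by move=> x y; rewrite addr0.
- by move=> x a; rewrite bm_r0m.
Defined.

Definition endo_id : endo.
Proof. by refine (@Endo (fun x => x) _ _). Defined.

Definition endo_comp (s t : endo) : endo.
Proof.
refine (@Endo (fun x => s (t x)) _ _).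
- by move=> x y; rewrite !efun_add.
- by move=> x a; rewrite !efun_lin.
Defined.

Definition endo_of_B (b : B) : endo.
Proof.
refine (@Endo (bm_l b) _ _).
- exact: bm_lD.
- by move=> x a; rewrite bm_lr.
Defined.

(* the image of m (x) f under M (x)_A M^* -> S : x |-> m f(x) *)
Definition endo_rank1 (m : M) (f : dual) : endo.
Proof.
refine (@Endo (fun x => bm_r m (f x)) _ _).
- by move=> x y; rewrite dfun_add bm_rDs.
- by move=> x a; rewrite dfun_lin bm_rM.
Defined.

Definition endo_sum (I : finType) (F : I -> endo) : endo :=
  \big[endo_add/endo_zero]_(i : I) F i.

(* The comatrix A-coring C = M^* (x)_B M built from the dual basis (e, es):  *)
(* Delta(f (x) m) = sum_i (f (x) e_i) (x)_A (e_i^* (x) m).                    *)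
Variables (n : nat) (e : 'I_n -> M) (es : 'I_n -> dual).

Definition comatrix_delta (f : dual) (m : M) : seq (dual * M * dual * M) :=
  [seq (f, e i, es i, m) | i <- enum 'I_n].

Definition comatrix_pre_cointegral (gam : dual -> M -> dual -> M -> A) : Prop :=
  @pre_cointegral B A dual M +%R *%R dual_add dual_opp +%R dual_rB (@bm_l _ _ M)
    dual_lA (@bm_r _ _ M) comatrix_delta gam.

(* The Sweedler S-coring S (x)_B S: Delta(s (x) s') = (s (x) 1) (x)_S (1 (x) s') *)
Definition sweedler_delta (s s' : endo) : seq (endo * endo * endo * endo) :=
  [:: (s, endo_id, endo_id, s')].

Definition sweedler_pre_cointegral (gam : endo -> endo -> endo -> endo -> endo)
  : Prop :=
  @pre_cointegral B endo endo endo endo_add endo_comp endo_add endo_opp endo_add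
    (fun s b => endo_comp s (endo_of_B b)) (fun b s => endo_comp (endo_of_B b) s)
    endo_comp endo_comp sweedler_delta gam.

(* gamma~ : S (x)_B S (x)_B S -> S.  Under S ~ M (x)_A M^*, whose inverse is  *)
(* s |-> sum_i s(e_i) (x) e_i^*, one has                                      *)
(* gamma~(s (x) s' (x) s'') =                                                *)
(*   sum_{i,j,k} s(e_i) gam(e_i^* (x) s'(e_j) (x) e_j^* (x) s''(e_k)) (x) e_k^* *)
Definition gamma_tilde (gam : dual -> M -> dual -> M -> A) (s s' s'' : endo)
  : endo :=
  endo_sum (fun i : 'I_n => endo_sum (fun j : 'I_n => endo_sum (fun k : 'I_n =>
    endo_rank1 (s (e i)) (dual_lA (gam (es i) (s' (e j)) (es j) (s'' (e k)))
                                  (es k))))).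

(* gamma~ viewed on (S (x)_B S) (x)_S (S (x)_B S) ~ S (x)_B S (x)_B S,        *)
(* (s1 (x) s2) (x)_S (s3 (x) s4) |-> s1 (x) s2 s3 (x) s4                      *)
Definition gamma_tilde4 (gam : dual -> M -> dual -> M -> A)
  (s1 s2 s3 s4 : endo) : endo :=
  gamma_tilde gam s1 (endo_comp s2 s3) s4.

End Bimod.

(* Main.v *)
Require Import Defs.
From mathcomp Require Import all_boot all_algebra.
From Stdlib Require Import FunctionalExtensionality ProofIrrelevance.
Set Implicit Arguments. Unset Strict Implicit. Unset Printing Implicit Defensive.
Import GRing.Theory.
Local Open Scope ring_scope.

Arguments teq_refl {R X Y addX oppX addY rX lY} s.
Arguments teq_swap {R X Y addX oppX addY rX lY} s t.
Arguments teq_addl {R X Y addX oppX addY rX lY} x1 x2 y.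
Arguments teq_addr {R X Y addX oppX addY rX lY} x y1 y2.
Arguments teq_bal {R X Y addX oppX addY rX lY} x r y.
Arguments teq_opp {R X Y addX oppX addY rX lY} x y.

Section TeqGen.
Variables (R X Y : Type) (addX : X -> X -> X) (oppX : X -> X)
  (addY : Y -> Y -> Y) (rX : X -> R -> X) (lY : R -> Y -> Y).
Local Notation T := (teq addX oppX addY rX lY).

Lemma teq_flat (I : Type) (r : seq I) (f g : I -> seq (X * Y)) :
  (forall i, T (f i) (g i)) -> T (flatten (map f r)) (flatten (map g r)).
Proof. move=> H; elim: r => [|i r IH] /=; first exact: teq_refl. exact: teq_cat. Qed.

Lemma flat_nil (I : Type) (r : seq I) :
  flatten [seq [::] : seq (X*Y) | _ <- r] = [::].
Proof. by elim: r. Qed.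

Lemma teq_flat_cat (I : Type) (r : seq I) (f g : I -> seq (X*Y)) :
  T (flatten [seq f i ++ g i | i <- r]) (flatten (map f r) ++ flatten (map g r)).
Proof.
elim: r => [|i r IH] /=; first exact: teq_refl.
apply: teq_trans (teq_cat (teq_refl (f i ++ g i)) IH) _.
rewrite -!catA; apply: teq_cat (teq_refl _) _.
rewrite !catA; apply: teq_cat (teq_swap _ _) (teq_refl _).
Qed.

Lemma teq_flat_comm (I J : Type) (r1 : seq I) (r2 : seq J)
  (f : I -> J -> seq (X*Y)) :
  T (flatten [seq flatten [seq f i j | j <- r2] | i <- r1])
    (flatten [seq flatten [seq f i j | i <- r1] | j <- r2]).
Proof.
elim: r1 => [|i r1 IH] /=; first by rewrite flat_nil; exact: teq_refl.
apply: teq_trans (teq_cat (teq_refl _) IH) _.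
apply: teq_sym; exact: (teq_flat_cat r2 (fun j => f i j)
   (fun j => flatten [seq f i0 j | i0 <- r1])).
Qed.

Lemma map_flat1 (I : Type) (r : seq I) (f : I -> X * Y) :
  [seq f i | i <- r] = flatten [seq [:: f i] | i <- r].
Proof. by elim: r => //= i r ->. Qed.

End TeqGen.

Section TeqMap.
Variables (R X1 Y1 X2 Y2 : Type) (addX1 : X1 -> X1 -> X1) (oppX1 : X1 -> X1)
  (addY1 : Y1 -> Y1 -> Y1) (rX1 : X1 -> R -> X1) (lY1 : R -> Y1 -> Y1)
  (addX2 : X2 -> X2 -> X2) (oppX2 : X2 -> X2)
  (addY2 : Y2 -> Y2 -> Y2) (rX2 : X2 -> R -> X2) (lY2 : R -> Y2 -> Y2).
Variables (phi1 : X1 -> X2) (phi2 : Y1 -> Y2).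
Hypotheses (h1 : forall x x', phi1 (addX1 x x') = addX2 (phi1 x) (phi1 x'))
  (h2 : forall x, phi1 (oppX1 x) = oppX2 (phi1 x))
  (h3 : forall y y', phi2 (addY1 y y') = addY2 (phi2 y) (phi2 y'))
  (h4 : forall x r y, teq addX2 oppX2 addY2 rX2 lY2
          [:: (phi1 (rX1 x r), phi2 y)] [:: (phi1 x, phi2 (lY1 r y))]).

Lemma teq_map s t : teq addX1 oppX1 addY1 rX1 lY1 s t ->
  teq addX2 oppX2 addY2 rX2 lY2 (map (fun p => (phi1 p.1, phi2 p.2)) s)
    (map (fun p => (phi1 p.1, phi2 p.2)) t).
Proof.
elim=> {s t} /=.
- move=> s; exact: teq_refl.
- move=> s t _ H; exact: teq_sym.
- move=> s t u _ H1 _ H2; exact: teq_trans H1 H2.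
- move=> s1 s2 t1 t2 _ H1 _ H2; rewrite !map_cat; exact: teq_cat.
- move=> s t; rewrite !map_cat; exact: teq_swap.
- move=> x1 x2 y; rewrite h1; exact: teq_addl.
- move=> x y1 y2; rewrite h3; exact: teq_addr.
- move=> x r y; exact: h4.
- move=> x y; rewrite h2; exact: teq_opp.
Qed.
End TeqMap.
Section Alg.
Variables (B A : pzRingType) (M : bimod B A).

Lemma endo_ext (s t : endo M) : (forall x, s x = t x) -> s = t.
Proof.
case: s t => [f fa fl] [g ga gl] /= H.
have E : f = g by apply: functional_extensionality.
subst g; by rewrite (proof_irrelevance _ fa ga) (proof_irrelevance _ fl gl).
Qed.

Lemma dual_ext (s t : dual M) : (forall x, s x = t x) -> s = t.
Proof.
case: s t => [f fa fl] [g ga gl] /= H.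
have E : f = g by apply: functional_extensionality.
subst g; by rewrite (proof_irrelevance _ fa ga) (proof_irrelevance _ fl gl).
Qed.

Lemma efun0 (s : endo M) : s 0 = 0.
Proof.
have h := efun_add s 0 0; rewrite addr0 in h.
by apply: (addrI (s 0)); rewrite addr0 -h.
Qed.

Lemma dfun0 (s : dual M) : s 0 = 0.
Proof.
have h := dfun_add s 0 0; rewrite addr0 in h.
by apply: (addrI (s 0)); rewrite addr0 -h.
Qed.

Lemma bm_r0 (m : M) : bm_r m 0 = 0.
Proof.
have h := bm_rDs m 0 0; rewrite addr0 in h.
by apply: (addrI (bm_r m 0)); rewrite addr0 -h.
Qed.

Lemma bm_0l (m : M) : bm_l 0 m = 0.
Proof.
have h := bm_lDs 0 0 m; rewrite addr0 in h.
by apply: (addrI (bm_l 0 m)); rewrite addr0 -h.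
Qed.

Lemma efun_sum (s : endo M) I (r : seq I) (F : I -> M) :
  s (\sum_(i <- r) F i) = \sum_(i <- r) s (F i).
Proof. exact: (big_morph _ (efun_add s) (efun0 s)). Qed.

Lemma dfun_sum (s : dual M) I (r : seq I) (F : I -> M) :
  s (\sum_(i <- r) F i) = \sum_(i <- r) s (F i).
Proof. exact: (big_morph _ (dfun_add s) (dfun0 s)). Qed.

Lemma bm_r_suml I (r : seq I) (F : I -> M) a :
  bm_r (\sum_(i <- r) F i) a = \sum_(i <- r) bm_r (F i) a.
Proof. exact: (big_morph (fun m => bm_r m a) (fun x y => bm_rD x y a) (@bm_r0m _ _ M a)). Qed.

Lemma bm_r_sumr I (r : seq I) (F : I -> A) (m : M) :
  bm_r m (\sum_(i <- r) F i) = \sum_(i <- r) bm_r m (F i).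
Proof. exact: (big_morph (bm_r m) (bm_rDs m) (bm_r0 m)). Qed.

Definition esum I (r : seq I) (F : I -> endo M) :=
  \big[@endo_add _ _ M/@endo_zero _ _ M]_(i <- r) F i.

Lemma esum_apply I (r : seq I) F x : esum r F x = \sum_(i <- r) F i x.
Proof.
rewrite /esum; elim: r => [|i r IH]; first by rewrite !big_nil.
by rewrite !big_cons /= IH.
Qed.

Lemma endo_sum_apply (I : finType) (F : I -> endo M) x :
  endo_sum F x = \sum_(i : I) F i x.
Proof. exact: esum_apply. Qed.

Definition dual_zero : dual M.
Proof.
refine (@Dual _ _ M (fun _ => 0) _ _).
- by move=> *; rewrite addr0.
- by move=> *; rewrite mul0r.
Defined.

Definition dsum I (r : seq I) (F : I -> dual M) :=
  \big[@dual_add _ _ M/dual_zero]_(i <- r) F i.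

Lemma dsum_apply I (r : seq I) F x : dsum r F x = \sum_(i <- r) F i x.
Proof.
rewrite /dsum; elim: r => [|i r IH]; first by rewrite !big_nil.
by rewrite !big_cons /= IH.
Qed.

Lemma enum_idx (T : finType) : enum T = index_enum T.
Proof. by rewrite enumT [index_enum _]unlock. Qed.

End Alg.
Section Main.
Variables (B A : pzRingType) (M : bimod B A) (n : nat)
  (e : 'I_n -> M) (es : 'I_n -> dual M).
Hypothesis dual_basis : forall m : M, m = (\sum_(i < n) bm_r (e i) (es i m))%R.
Variable gam : dual M -> M -> dual M -> M -> A.
Hypothesis Hgam : comatrix_pre_cointegral e es gam.

Local Notation r := (index_enum 'I_n).

Lemma gD1 x1 x2 y x' y' :
  gam (dual_add x1 x2) y x' y' = gam x1 y x' y' + gam x2 y x' y'.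
Proof. by case: Hgam => [[h _ _ _ _] _ _]. Qed.
Lemma gD2 x y1 y2 x' y' :
  gam x (y1 + y2) x' y' = gam x y1 x' y' + gam x y2 x' y'.
Proof. by case: Hgam => [[_ h _ _ _] _ _]. Qed.
Lemma gD3 x y x1' x2' y' :
  gam x y (dual_add x1' x2') y' = gam x y x1' y' + gam x y x2' y'.
Proof. by case: Hgam => [[_ _ h _ _] _ _]. Qed.
Lemma gD4 x y x' y1' y2' :
  gam x y x' (y1' + y2') = gam x y x' y1' + gam x y x' y2'.
Proof. by case: Hgam => [[_ _ _ h _] _ _]. Qed.
Lemma gB1 x b y x' y' : gam (dual_rB x b) y x' y' = gam x (bm_l b y) x' y'.
Proof. by case: Hgam => [[_ _ _ _ [h _ _]] _ _]. Qed.
Lemma gB2 x y k x' y' : gam x (bm_r y k) x' y' = gam x y (dual_lA k x') y'.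
Proof. by case: Hgam => [[_ _ _ _ [_ h _]] _ _]. Qed.
Lemma gB3 x y x' b y' : gam x y (dual_rB x' b) y' = gam x y x' (bm_l b y').
Proof. by case: Hgam => [[_ _ _ _ [_ _ h]] _ _]. Qed.
Lemma gL k x y x' y' : gam (dual_lA k x) y x' y' = k * gam x y x' y'.
Proof. by case: Hgam => [_ [h _] _]. Qed.
Lemma gR x y x' y' k : gam x y x' (bm_r y' k) = gam x y x' y' * k.
Proof. by case: Hgam => [_ [_ h] _]. Qed.

Lemma DB (m : M) : m = \sum_(i <- r) bm_r (e i) (es i m).
Proof. exact: dual_basis. Qed.

Lemma dual_expand (h : dual M) :
  h = dsum r (fun l => dual_lA (h (e l)) (es l)).
Proof.
apply: dual_ext => x; rewrite dsum_apply {1}(DB x) dfun_sum.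
by apply: eq_bigr => l _; rewrite dfun_lin.
Qed.

Lemma endo_expand (s : endo M) :
  s = esum r (fun a => endo_rank1 (s (e a)) (es a)).
Proof.
apply: endo_ext => x; rewrite esum_apply {1}(DB x) efun_sum.
by apply: eq_bigr => l _; rewrite efun_lin.
Qed.

Lemma gam1_sum I (rr : seq I) F y x' y' :
  gam (dsum rr F) y x' y' = \sum_(i <- rr) gam (F i) y x' y'.
Proof.
have z : gam (dual_zero M) y x' y' = 0.
  have h := gD1 (dual_zero M) (dual_zero M) y x' y'.
  have E : dual_add (dual_zero M) (dual_zero M) = dual_zero M.
    by apply: dual_ext => w /=; rewrite addr0.
  rewrite E in h.
  by apply: (addrI (gam (dual_zero M) y x' y')); rewrite addr0 -h.
exact: (big_morph (fun f => gam f y x' y') (fun a b => gD1 a b y x' y') z).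
Qed.

Lemma gam3_sum I (rr : seq I) F x y y' :
  gam x y (dsum rr F) y' = \sum_(i <- rr) gam x y (F i) y'.
Proof.
have z : gam x y (dual_zero M) y' = 0.
  have h := gD3 x y (dual_zero M) (dual_zero M) y'.
  have E : dual_add (dual_zero M) (dual_zero M) = dual_zero M.
    by apply: dual_ext => w /=; rewrite addr0.
  rewrite E in h.
  by apply: (addrI (gam x y (dual_zero M) y')); rewrite addr0 -h.
exact: (big_morph (fun f => gam x y f y') (fun a b => gD3 x y a b y') z).
Qed.

Lemma gam2_sum I (rr : seq I) (F : I -> M) x x' y' :
  gam x (\sum_(i <- rr) F i) x' y' = \sum_(i <- rr) gam x (F i) x' y'.
Proof.
have z : gam x 0 x' y' = 0.
  have h := gD2 x 0 0 x' y'; rewrite addr0 in h.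
  by apply: (addrI (gam x 0 x' y')); rewrite addr0 -h.
exact: (big_morph (fun m => gam x m x' y') (fun a b => gD2 x a b x' y') z).
Qed.

Lemma gam4_sum I (rr : seq I) (F : I -> M) x y x' :
  gam x y x' (\sum_(i <- rr) F i) = \sum_(i <- rr) gam x y x' (F i).
Proof.
have z : gam x y x' 0 = 0.
  have h := gD4 x y x' 0 0; rewrite addr0 in h.
  by apply: (addrI (gam x y x' 0)); rewrite addr0 -h.
exact: (big_morph (fun m => gam x y x' m) (fun a b => gD4 x y x' a b) z).
Qed.

Lemma collapse4 f m g (W : endo M) z :
  \sum_(k <- r) gam f m g (W (e k)) * es k z = gam f m g (W z).
Proof.
rewrite {2}(DB z) efun_sum gam4_sum; apply: eq_bigr => k _.
by rewrite efun_lin gR.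
Qed.

Lemma gt_raw s s' s'' z :
  gamma_tilde e es gam s s' s'' z =
  \sum_(i <- r) \sum_(j <- r) \sum_(k <- r)
     bm_r (s (e i)) (gam (es i) (s' (e j)) (es j) (s'' (e k)) * es k z).
Proof.
rewrite /gamma_tilde endo_sum_apply; apply: eq_bigr => i _.
rewrite endo_sum_apply; apply: eq_bigr => j _.
by rewrite endo_sum_apply.
Qed.

Lemma gt_apply s s' s'' z :
  gamma_tilde e es gam s s' s'' z =
  \sum_(i <- r) \sum_(j <- r) bm_r (s (e i)) (gam (es i) (s' (e j)) (es j) (s'' z)).
Proof.
rewrite gt_raw; apply: eq_bigr => i _; apply: eq_bigr => j _.
by rewrite -bm_r_sumr collapse4.
Qed.

Lemma gt4_apply s1 s2 s3 s4 z :
  gamma_tilde4 e es gam s1 s2 s3 s4 z =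
  \sum_(i <- r) \sum_(j <- r)
     bm_r (s1 (e i)) (gam (es i) (s2 (s3 (e j))) (es j) (s4 z)).
Proof. exact: gt_apply. Qed.


Lemma bal1 (x : endo M) b m g Y :
  \sum_(i <- r) bm_r (x (bm_l b (e i))) (gam (es i) m g Y) =
  \sum_(i <- r) bm_r (x (e i)) (gam (es i) (bm_l b m) g Y).
Proof.
symmetry.
transitivity (\sum_(i <- r) \sum_(l <- r)
   bm_r (bm_r (x (e i)) (es i (bm_l b (e l)))) (gam (es l) m g Y)).
  apply: eq_bigr => i _.
  rewrite -gB1 {1}(dual_expand (dual_rB (es i) b)) gam1_sum bm_r_sumr.
  by apply: eq_bigr => l _; rewrite gL bm_rM.
rewrite exchange_big /=; apply: eq_bigr => l _.
rewrite -bm_r_suml; congr bm_r.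
rewrite {2}(DB (bm_l b (e l))) efun_sum; apply: eq_bigr => i _.
by rewrite efun_lin.
Qed.

Lemma bal3 f (W : endo M) b Y :
  \sum_(j <- r) gam f (W (bm_l b (e j))) (es j) Y =
  \sum_(j <- r) gam f (W (e j)) (es j) (bm_l b Y).
Proof.
symmetry.
transitivity (\sum_(j <- r) \sum_(l <- r)
   gam f (bm_r (W (e j)) (es j (bm_l b (e l)))) (es l) Y).
  apply: eq_bigr => j _.
  rewrite -gB3 {1}(dual_expand (dual_rB (es j) b)) gam3_sum.
  by apply: eq_bigr => l _; rewrite gB2.
rewrite exchange_big /=; apply: eq_bigr => l _.
rewrite -gam2_sum; congr gam.
rewrite {2}(DB (bm_l b (e l))) efun_sum; apply: eq_bigr => j _.
by rewrite efun_lin.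
Qed.

Local Notation gt4 := (gamma_tilde4 e es gam).

Lemma gt4_tensor :
  @tensor_map4 B (endo M) (endo M) (endo M) (@endo_add _ _ M) (@endo_add _ _ M) (@endo_add _ _ M)
    (fun s b => endo_comp s (@endo_of_B _ _ M b)) (fun b s => endo_comp (@endo_of_B _ _ M b) s)
    (@endo_comp _ _ M) (@endo_comp _ _ M) gt4.
Proof.
split.
- move=> x1 x2 y x' y'; apply: endo_ext => z.
  rewrite [RHS]/= !gt4_apply -big_split; apply: eq_bigr => i _.
  rewrite -big_split; apply: eq_bigr => j _; by rewrite /= bm_rD.
- move=> x y1 y2 x' y'; apply: endo_ext => z.
  rewrite [RHS]/= !gt4_apply -big_split; apply: eq_bigr => i _.
  rewrite -big_split; apply: eq_bigr => j _; by rewrite /= gD2 bm_rDs.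
- move=> x y x1' x2' y'; apply: endo_ext => z.
  rewrite [RHS]/= !gt4_apply -big_split; apply: eq_bigr => i _.
  rewrite -big_split; apply: eq_bigr => j _; by rewrite /= efun_add gD2 bm_rDs.
- move=> x y x' y1' y2'; apply: endo_ext => z.
  rewrite [RHS]/= !gt4_apply -big_split; apply: eq_bigr => i _.
  rewrite -big_split; apply: eq_bigr => j _; by rewrite /= gD4 bm_rDs.
split.
- move=> x b y x' y'; apply: endo_ext => z.
  rewrite !gt4_apply /= exchange_big [in RHS]exchange_big /=.
  apply: eq_bigr => j _; exact: bal1.
- move=> x y k x' y'; apply: endo_ext => z.
  by rewrite !gt4_apply.
- move=> x y x' b y'; apply: endo_ext => z.
  rewrite !gt4_apply /=; apply: eq_bigr => i _.
  rewrite -!bm_r_sumr; congr bm_r.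
  exact: (bal3 _ (endo_comp y x')).
Qed.

Lemma gt4_bimod :
  @bimod_map4 (endo M) (endo M) (endo M) (@endo_comp _ _ M) (@endo_comp _ _ M) (@endo_comp _ _ M) gt4.
Proof.
split.
- move=> k x y x' y'; apply: endo_ext => z.
  rewrite [RHS]/= !gt4_apply efun_sum; apply: eq_bigr => i _.
  rewrite efun_sum; apply: eq_bigr => j _; by rewrite /= efun_lin.
- move=> x y x' y' k; apply: endo_ext => z.
  by rewrite [RHS]/= !gt4_apply.
Qed.

Local Notation TE := (teq (@endo_add _ _ M) (@endo_opp _ _ M) (@endo_add _ _ M)
  (fun s b => endo_comp s (@endo_of_B _ _ M b))
  (fun b s => endo_comp (@endo_of_B _ _ M b) s)).
Local Notation ez := (@endo_zero _ _ M).

Lemma zeroL y : TE [:: (ez, y)] [::].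
Proof.
have e0 : endo_add ez ez = ez by apply: endo_ext => x /=; rewrite addr0.
have t1 : TE [:: (ez, y); (ez, y)] [:: (ez, y)].
  by rewrite -{3}e0; exact: teq_sym (teq_addl _ _ _).
have t2 : TE ([:: (ez, y)] ++ [::]) ([:: (ez, y)] ++ [:: (ez, y); (endo_opp ez, y)]).
  exact: teq_cat (teq_refl _) (teq_sym (teq_opp _ _)).
have t3 : TE ([:: (ez, y); (ez, y)] ++ [:: (endo_opp ez, y)])
             ([:: (ez, y)] ++ [:: (endo_opp ez, y)]).
  exact: teq_cat t1 (teq_refl _).
exact: teq_trans t2 (teq_trans t3 (teq_opp _ _)).
Qed.

Lemma zeroR x : TE [:: (x, ez)] [::].
Proof.
have e1 : ez = endo_comp (@endo_of_B _ _ M 0) ez.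
  by apply: endo_ext => z /=; rewrite bm_0l.
have e2 : endo_comp x (@endo_of_B _ _ M 0) = ez.
  by apply: endo_ext => z /=; rewrite bm_0l efun0.
have t : TE [:: (endo_comp x (@endo_of_B _ _ M 0), ez)]
            [:: (x, endo_comp (@endo_of_B _ _ M 0) ez)] := teq_bal x 0 ez.
rewrite {1}e1; apply: teq_trans (teq_sym t) _; rewrite e2; exact: zeroL.
Qed.

Lemma sumL I (rr : seq I) (F : I -> endo M) y (G : I -> seq (endo M * endo M)) :
  (forall i, TE [:: (F i, y)] (G i)) -> TE [:: (esum rr F, y)] (flatten (map G rr)).
Proof.
move=> H; elim: rr => [|i rr IH] /=; first by rewrite /esum big_nil; exact: zeroL.
rewrite /esum big_cons; apply: teq_trans (teq_addl _ _ _) _.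
exact: (teq_cat (H i) IH).
Qed.

Lemma sumR I (rr : seq I) (F : I -> endo M) x (G : I -> seq (endo M * endo M)) :
  (forall i, TE [:: (x, F i)] (G i)) -> TE [:: (x, esum rr F)] (flatten (map G rr)).
Proof.
move=> H; elim: rr => [|i rr IH] /=; first by rewrite /esum big_nil; exact: zeroR.
rewrite /esum big_cons; apply: teq_trans (teq_addr _ _ _) _.
exact: (teq_cat (H i) IH).
Qed.

Lemma pair_teq s1 s2 s3 s4 :
  TE [:: (s1, endo_comp (@endo_id _ _ M) (gt4 (@endo_id _ _ M) s2 s3 s4))]
     [:: (endo_comp (gt4 s1 s2 s3 (@endo_id _ _ M)) (@endo_id _ _ M), s4)].
Proof.
pose R a := endo_rank1 (s1 (e a)) (es a).
pose Tm i j k := endo_rank1 (bm_r (e i) (gam (es i) (s2 (s3 (e j))) (es j) (s4 (e k)))) (es k).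
pose U a j l := endo_rank1 (s1 (e a)) (dual_lA (gam (es a) (s2 (s3 (e j))) (es j) (e l)) (es l)).
pose V k := endo_rank1 (s4 (e k)) (es k).
have E1 : s1 = esum r R by exact: endo_expand.
have E4 : s4 = esum r V by exact: endo_expand.
have E2 : endo_comp (@endo_id _ _ M) (gt4 (@endo_id _ _ M) s2 s3 s4) =
          esum r (fun i => esum r (fun j => esum r (fun k => Tm i j k))).
  apply: endo_ext => z; rewrite esum_apply.
  transitivity (gamma_tilde e es gam (@endo_id _ _ M) (endo_comp s2 s3) s4 z); first by [].
  rewrite gt_raw.
  apply: eq_bigr => i _; rewrite esum_apply; apply: eq_bigr => j _.
  rewrite esum_apply; apply: eq_bigr => k _; by rewrite /= bm_rM.
have E3 : endo_comp (gt4 s1 s2 s3 (@endo_id _ _ M)) (@endo_id _ _ M) =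
          esum r (fun a => esum r (fun j => esum r (fun l => U a j l))).
  apply: endo_ext => z; rewrite esum_apply.
  transitivity (gamma_tilde e es gam s1 (endo_comp s2 s3) (@endo_id _ _ M) z); first by [].
  rewrite gt_raw.
  apply: eq_bigr => i _; rewrite esum_apply; apply: eq_bigr => j _.
  by rewrite esum_apply.
rewrite E2 E3.
have L1 : TE [:: (s1, esum r (fun i => esum r (fun j => esum r (fun k => Tm i j k))))]
  (flatten [seq flatten [seq flatten [seq flatten [seq [:: (R a, Tm i j k)]
     | k <- r] | j <- r] | i <- r] | a <- r]).
  rewrite {1}E1; apply: sumL => a; apply: sumR => i; apply: sumR => j.
  apply: sumR => k; exact: teq_refl.
have L5 : TE [:: (esum r (fun a => esum r (fun j => esum r (fun l => U a j l))), s4)]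
  (flatten [seq flatten [seq flatten [seq flatten [seq [:: (U a j l, V k)]
     | k <- r] | l <- r] | j <- r] | a <- r]).
  rewrite E4; apply: sumL => a; apply: sumL => j; apply: sumL => l.
  apply: sumR => k; exact: teq_refl.
apply: teq_trans L1 _.
eapply teq_trans; last exact: (teq_sym L5).
apply: teq_trans (_ : TE _ (flatten [seq flatten [seq flatten [seq flatten
   [seq [:: (R a, Tm i j k)] | i <- r] | k <- r] | j <- r] | a <- r])) _.
  apply: teq_flat => a; eapply teq_trans; first exact: teq_flat_comm.
  apply: teq_flat => j; exact: teq_flat_comm.
apply: teq_trans (_ : TE _ (flatten [seq flatten [seq flatten [seq flatten
   [seq [:: (U a j l, V k)] | l <- r] | k <- r] | j <- r] | a <- r])) _; last first.
  apply: teq_flat => a; apply: teq_flat => j; exact: teq_flat_comm.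
apply: teq_flat => a; apply: teq_flat => j; apply: teq_flat => k.
rewrite -!map_flat1.
have h1 : forall f f', endo_rank1 (s1 (e a)) (dual_add f f') =
   endo_add (endo_rank1 (s1 (e a)) f) (endo_rank1 (s1 (e a)) f').
  by move=> f f'; apply: endo_ext => z /=; rewrite bm_rDs.
have h2 : forall f, endo_rank1 (s1 (e a)) (dual_opp f) =
   endo_opp (endo_rank1 (s1 (e a)) f).
  by move=> f; apply: endo_ext => z /=; rewrite bm_rN.
have h3 : forall m m' : M, endo_rank1 (m + m') (es k) =
   endo_add (endo_rank1 m (es k)) (endo_rank1 m' (es k)).
  by move=> m m'; apply: endo_ext => z /=; rewrite bm_rD.
have h4 : forall f b m, TE [:: (endo_rank1 (s1 (e a)) (dual_rB f b), endo_rank1 m (es k))]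
    [:: (endo_rank1 (s1 (e a)) f, endo_rank1 (bm_l b m) (es k))].
  move=> f b m.
  have -> : endo_rank1 (s1 (e a)) (dual_rB f b) =
            endo_comp (endo_rank1 (s1 (e a)) f) (@endo_of_B _ _ M b).
    by apply: endo_ext.
  have -> : endo_rank1 (bm_l b m) (es k) =
            endo_comp (@endo_of_B _ _ M b) (endo_rank1 m (es k)).
    by apply: endo_ext => z /=; rewrite bm_lr.
  exact: (teq_bal _ b _).
have Hpc : forall c c', teq (@dual_add _ _ M) (@dual_opp _ _ M) +%R (@dual_rB _ _ M)
    (@bm_l _ _ M) (pc_lhs (@bm_r _ _ M) (comatrix_delta e es) gam c c')
    (pc_rhs (@dual_lA _ _ M) (comatrix_delta e es) gam c c').
  by case: Hgam.
have H := teq_map h1 h2 h3 h4 (Hpc [:: (es a, s2 (s3 (e j)))] [:: (es j, s4 (e k))]).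
move: H; rewrite /pc_lhs /pc_rhs /comatrix_delta /= !cats0 enum_idx -!map_comp.
by [].
Qed.

Lemma main_sec : sweedler_pre_cointegral gt4.
Proof.
split; [exact: gt4_tensor | exact: gt4_bimod |].
move=> c c'; rewrite /pc_lhs /pc_rhs /sweedler_delta.
apply: teq_flat => p; apply: teq_flat => p' /=.
exact: pair_teq.
Qed.

End Main.

Theorem lemma3p4 (B A : pzRingType) (M : bimod B A) (n : nat)
  (e : 'I_n -> M) (es : 'I_n -> dual M)
  (dual_basis : forall m : M, m = (\sum_(i < n) bm_r (e i) (es i m))%R)
  (gam : dual M -> M -> dual M -> M -> A) :
  comatrix_pre_cointegral e es gam ->
  sweedler_pre_cointegral (gamma_tilde4 e es gam).
Proof. move=> Hgam; exact: (main_sec dual_basis Hgam). Qed.
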